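(* Assume that for every $j\in J$ the subspace $Y^\perp$ is not contained in the hyperplane $\{p_j=0\}$, and that the critical set $C_{\mathcal A,a}$ is nonempty. Then the map $$\Psi_{\mathcal A,a}:U(\mathcal A)\to\mathbb C^n\times(\mathbb C^n)^*,\qquad (x,u)\mapsto\Big(x,\ \frac{\partial\Phi_{\mathcal A,a}}{\partial z_1}(x,u),\dots,\frac{\partial\Phi_{\mathcal A,a}}{\partial z_n}(x,u)\Big)=\Big(x,\frac{a_1}{f_1(x,u)},\dots,\frac{a_n}{f_n(x,u)}\Big),$$ restricted to $C_{\mathcal A,a}$, is a diffeomorphism of $C_{\mathcal A,a}$ onto $L_{Y,a}$.
   Context: Let $0<k<n$, $J=\{1,\dots,n\}$. On $\mathbb C^k$ (coordinates $t$) fix nonzero linear functions $g_j=b^1_jt_1+\dots+b^k_jt_k$, $j\in J$, spanning $(\mathbb C^k)^*$. On $\mathbb C^n\times\mathbb C^k$ (coordinates $z,t$) let $f_j=g_j+z_j$, $H_j=\{f_j=0\}$, and $U(\mathcal A)$ the complement of $\bigcup_jH_j$. Fix $a\in(\mathbb C^\times)^n$, $\Phi_{\mathcal A,a}=\sum_ja_j\log f_j$, and $C_{\mathcal A,a}=\{(x,u)\in U(\mathcal A):\partial\Phi_{\mathcal A,a}/\partial t_i(x,u)=0,\ i=1,\dots,k\}$, where $\partial\Phi_{\mathcal A,a}/\partial t_i=\sum_jb^i_ja_j/f_j$. $Y\subset\mathbb C^n$ is the $k$-dimensional subspace spanned by $b^i=(b^i_1,\dots,b^i_n)$, $i=1,\dots,k$.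 $\mathbb C^n$ has coordinates $q_1,\dots,q_n$ and $(\mathbb C^n)^*$ has dual coordinates $p_1,\dots,p_n$; $Y^\perp\subset(\mathbb C^n)^*$ is the annihilator of $Y$. With $r_a(q,p)=(q_1+a_1/p_1,\dots,q_n+a_n/p_n,p)$ (defined where all $p_j\ne0$), $L_{Y,a}=r_a(Y\times Y^\perp)$, the image of the points of $Y\times Y^\perp$ with all $p_j\neq 0$. *)

(* Defs.v *)
From HB Require Import structures.
From mathcomp Require Import all_boot all_order all_algebra.
From mathcomp Require Import all_classical all_reals all_analysis.
From mathcomp Require Import complex.
Set Implicit Arguments. Unset Strict Implicit. Unset Printing Implicit Defensive.
Import Order.TTheory GRing.Theory Num.Theory.
Import numFieldNormedType.Exports.
Local Open Scope classical_set_scope.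
Local Open Scope ring_scope.
Local Open Scope complex_scope.

(* ---------- Real C^oo smoothness for maps between complex normed spaces ---
   A complex vector space is regarded as a real one: derivatives are taken
   along every direction v with a REAL increment h (h%:C *: v).           *)
Section Smooth.
Variables (R : realType) (V W : normedModType R[i]).

Definition rdquot (F : V -> W) (x v : V) : R -> W :=
  fun h => (h%:C)^-1 *: (F (x + h%:C *: v) - F x).

Definition rderivable (F : V -> W) (x v : V) : Prop :=
  cvg (rdquot F x v @ (0 : R)^').

Definition rderive (F : V -> W) (x v : V) : W :=
  lim (rdquot F x v @ (0 : R)^').

Fixpoint riter_derive (vs : seq V) (F : V -> W) : V -> W :=
  match vs with
  | [::] => F
  | v :: vs' => fun x => rderive (riter_derive vs' F) x v
  end.

Definition smooth_on (U : set V) (F : V -> W) : Prop :=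
  forall vs : seq V,
    (forall x, U x -> forall v, rderivable (riter_derive vs F) x v) /\
    (forall x, U x -> {for x, continuous (riter_derive vs F)}).

Definition smooth_subset (A : set V) (F : V -> W) : Prop :=
  forall x, A x -> exists (U : set V) (G : V -> W),
    [/\ open U, U x, smooth_on U G & forall y, A y -> U y -> G y = F y].

End Smooth.

Definition diffeo_onto (R : realType) (V W : normedModType R[i])
    (A : set V) (B : set W) (F : V -> W) : Prop :=
  exists G : W -> V,
    [/\ (forall x, A x -> B (F x)),
        (forall y, B y -> A (G y)),
        (forall x, A x -> G (F x) = x),
        (forall y, B y -> F (G y) = y) &
        smooth_subset A F /\ smooth_subset B G].

(* ---------- The objects of the paper --------------------------------------
   b : 'M_(k, n) with b i j = b^i_j; g_j(t) = sum_i b^i_j t_i = (t *m b) 0 j.                     *)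
Section Paper.
Variables (R : realType) (n k : nat) (b : 'M[R[i]]_(k, n)) (a : 'rV[R[i]]_n).

Definition fA (j : 'I_n) (z : 'rV[R[i]]_n * 'rV[R[i]]_k) : R[i] :=
  (z.2 *m b) 0 j + z.1 0 j.

Definition UA : set ('rV[R[i]]_n * 'rV[R[i]]_k) :=
  [set z | forall j, fA j z != 0].

(* dPhi/dt_i = sum_j b^i_j a_j / f_j *)
Definition dPhi_dt (i : 'I_k) (z : 'rV[R[i]]_n * 'rV[R[i]]_k) : R[i] :=
  \sum_(j < n) b i j * a 0 j / fA j z.

Definition critA : set ('rV[R[i]]_n * 'rV[R[i]]_k) :=
  [set z | UA z /\ forall i, dPhi_dt i z = 0].

Definition PsiA (z : 'rV[R[i]]_n * 'rV[R[i]]_k) : 'rV[R[i]]_n * 'rV[R[i]]_n :=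
  (z.1, \row_j (a 0 j / fA j z)).

(* Y = span of the rows b^i; Y^perp = annihilator of Y in (C^n)^*,
   dual vectors p encoded by their coordinates as row vectors *)
Definition inY (q : 'rV[R[i]]_n) : bool := (q <= b)%MS.
Definition inYperp (p : 'rV[R[i]]_n) : Prop := b *m p^T = 0.

Definition r_a (qp : 'rV[R[i]]_n * 'rV[R[i]]_n) : 'rV[R[i]]_n * 'rV[R[i]]_n :=
  (\row_j (qp.1 0 j + a 0 j / qp.2 0 j), qp.2).

Definition L_Ya : set ('rV[R[i]]_n * 'rV[R[i]]_n) :=
  [set w | exists q p, [/\ inY q, inYperp p, (forall j, p 0 j != 0) & w = r_a (q, p)]].

End Paper.

(* Main.v *)
Require Import Defs.
From HB Require Import structures.
From mathcomp Require Import all_boot all_order all_algebra.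
From mathcomp Require Import all_classical all_reals all_analysis.
From mathcomp Require Import complex.
From mathcomp Require Import ring.
Import Order.TTheory GRing.Theory Num.Theory.
Import numFieldNormedType.Exports.
Local Open Scope classical_set_scope.
Local Open Scope ring_scope.
Local Open Scope complex_scope.

Section Aux.
Variable R : realType.
Local Notation C := (R[i])^o.

Lemma normC_real (h : R) : `|h%:C| = `|h|%:C :> R[i].
Proof. by rewrite normc_def /= expr0n /= addr0 sqrtr_sqr. Qed.

Lemma iC_cvg0 : (fun h : R => (h%:C : C)) @ (0:R)^' --> (0 : C).
Proof.
apply/cvgrPdist_lt => e e0.
have Ie : complex.Im e = 0 by exact: (@ger0_Im R e (ltW e0)).
have ee : e = (complex.Re e)%:C by rewrite {1}[e]complexE Ie mulr0 addr0.
have Re0 : 0 < complex.Re e by move: e0; rewrite ee ltcR.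
near=> h; rewrite sub0r normrN normC_real ee ltcR.
near: h; exact: dnbhs0_lt.
Unshelve. all: by end_near. Qed.

Lemma cvg_bigsum (T : Type) (F : set_system T) (FF : Filter F)
   (W : normedModType R[i]) (I : finType) (f : I -> T -> W) (l : I -> W) :
  (forall i, f i @ F --> l i) ->
  (fun x => \sum_(i : I) f i x) @ F --> \sum_(i : I) l i.
Proof.
move=> fl; rewrite /index_enum; elim: (Finite.enum I) => [|i s IH].
  rewrite big_nil; under eq_fun do rewrite big_nil; exact: cvg_cst.
rewrite big_cons; under eq_fun do rewrite big_cons.
exact: cvgD.
Qed.

Section Expr.
Variables (m1 m2 : nat).
Definition VV : normedModType R[i] := ('rV[R[i]]_m1 * 'rV[R[i]]_m2)%type.
Local Notation V := (NormedModule.sort VV).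

Lemma path_cvg (z v : V) : (fun h : R => z + h%:C *: v) @ (0:R)^' --> z.
Proof.
rewrite -[X in _ --> X]addr0; apply: cvgD; first exact: cvg_cst.
rewrite -[X in _ --> X](scale0r v).
apply: cvgZ; [exact: iC_cvg0 | exact: cvg_cst].
Qed.

Lemma fst_coord_cont (j : 'I_m1) (z : V) : (fun y : V => (y.1 0 j : C)) @ z --> (z.1 0 j : C).
Proof.
apply: (@cvg_comp _ _ _ (fun y : V => y.1) (fun M : 'rV[R[i]]_m1 => (M 0 j : C))).
  exact: cvg_fst.
exact: coord_continuous.
Qed.

Lemma snd_coord_cont (j : 'I_m2) (z : V) : (fun y : V => (y.2 0 j : C)) @ z --> (z.2 0 j : C).
Proof.
apply: (@cvg_comp _ _ _ (fun y : V => y.2) (fun M : 'rV[R[i]]_m2 => (M 0 j : C))).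
  exact: cvg_snd.
exact: coord_continuous.
Qed.

Inductive ex := EC of R[i] | EX1 of 'I_m1 | EX2 of 'I_m2 | EA of ex & ex
  | EMu of ex & ex | EI of ex.

Fixpoint ev (e : ex) (z : V) : C :=
  match e with
  | EC c => c | EX1 j => z.1 0 j | EX2 j => z.2 0 j
  | EA e1 e2 => ev e1 z + ev e2 z | EMu e1 e2 => ev e1 z * ev e2 z
  | EI e => (ev e z)^-1 end.

Fixpoint dfd (e : ex) (z : V) : Prop :=
  match e with
  | EC _ | EX1 _ | EX2 _ => True
  | EA e1 e2 | EMu e1 e2 => dfd e1 z /\ dfd e2 z
  | EI e => dfd e z /\ ev e z != 0 end.

Fixpoint Dx (v : V) (e : ex) : ex :=
  match e with
  | EC _ => EC 0 | EX1 j => EC (v.1 0 j) | EX2 j => EC (v.2 0 j)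
  | EA e1 e2 => EA (Dx v e1) (Dx v e2)
  | EMu e1 e2 => EA (EMu (Dx v e1) e2) (EMu e1 (Dx v e2))
  | EI e => EMu (EMu (EC (-1)) (Dx v e)) (EMu (EI e) (EI e)) end.

Lemma dfd_D v e z : dfd e z -> dfd (Dx v e) z.
Proof.
elim: e => //=.
- move=> e1 IH1 e2 IH2 [d1 d2]; split; [exact: IH1|exact: IH2].
- move=> e1 IH1 e2 IH2 [d1 d2]; split; split => //; [exact: IH1|exact: IH2].
- move=> e IH [d nz]; split; split => //; exact: IH.
Qed.
Lemma ev_cont e z : dfd e z -> ev e @ z --> ev e z.
Proof.
elim: e => /=.
- move=> c _; exact: cvg_cst.
- move=> j _; exact: fst_coord_cont.
- move=> j _; exact: snd_coord_cont.
- move=> e1 IH1 e2 IH2 [d1 d2]; exact: (cvgD (IH1 d1) (IH2 d2)).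
- move=> e1 IH1 e2 IH2 [d1 d2]; exact: (cvgM (IH1 d1) (IH2 d2)).
- move=> e IH [d nz]; exact: (cvgV nz (IH d)).
Qed.
Lemma dfd_near e z : dfd e z -> \forall y \near z, dfd e y.
Proof.
elim: e => /=.
- by move=> *; apply: filterE.
- by move=> *; apply: filterE.
- by move=> *; apply: filterE.
- move=> e1 IH1 e2 IH2 [d1 d2].
  apply: filterS2 (IH1 d1) (IH2 d2) => y a1 a2; by split.
- move=> e1 IH1 e2 IH2 [d1 d2].
  apply: filterS2 (IH1 d1) (IH2 d2) => y a1 a2; by split.
- move=> e IH [d nz].
  have /cvgrPdist_lt H1 := @ev_cont e z d.
  have np : 0 < `|ev e z| by rewrite normr_gt0.
  have H2 := H1 _ np. have H3 := IH d.
  near=> y. split; first by near: y.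
  have Hy : `|ev e z - ev e y| < `|ev e z| by near: y.
  apply/eqP => ey; move: Hy; rewrite ey subr0 ltxx //.
Unshelve. all: by end_near. Qed.
Lemma cvg_eqnear (f g : R -> C) (l : C) :
  (\forall h \near (0:R)^', f h = g h) -> g @ (0:R)^' --> l -> f @ (0:R)^' --> l.
Proof.
move=> fg gl; apply: cvg_trans gl; apply: near_eq_cvg.
by apply: filterS fg => h ->.
Qed.

Lemma ev_path e z v : dfd e z ->
  (fun h : R => ev e (z + h%:C *: v)) @ (0:R)^' --> ev e z.
Proof.
move=> d; apply: (@cvg_comp _ _ _ (fun h : R => z + h%:C *: v) (ev e) _ (nbhs z)).
  exact: path_cvg.
exact: ev_cont.
Qed.

Lemma iC_neq0 : \forall h \near (0:R)^', (h%:C : C) != 0.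
Proof.
near=> h; rewrite eqE /= negb_and; apply/orP; left.
by near: h; exact: nbhs_dnbhs_neq.
Unshelve. all: by end_near. Qed.

Lemma ev_deriv e z v : dfd e z ->
  rdquot (ev e) z v @ (0:R)^' --> ev (Dx v e) z.
Proof.
rewrite /rdquot; elim: e => /=.
- move=> c _; apply: (@cvg_eqnear _ (fun=> 0)); last exact: cvg_cst.
  by near=> h; rewrite subrr scaler0.
- move=> j _; apply: (@cvg_eqnear _ (fun=> v.1 0 j)); last exact: cvg_cst.
  have := iC_neq0; apply: filterS => h hn.
  rewrite /= !mxE /GRing.scale /=; field; exact: hn.
- move=> j _; apply: (@cvg_eqnear _ (fun=> v.2 0 j)); last exact: cvg_cst.
  have := iC_neq0; apply: filterS => h hn.
  rewrite /= !mxE /GRing.scale /=; field; exact: hn.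
- move=> e1 IH1 e2 IH2 [d1 d2].
  apply: (@cvg_eqnear _ _ _ _ (cvgD (IH1 d1) (IH2 d2))).
  near=> h; rewrite /GRing.scale /=; rewrite ?fctE; ring.
- move=> e1 IH1 e2 IH2 [d1 d2].
  have c1 := cvgM (IH1 d1) (@ev_path e2 z v d2).
  have c2 := cvgM (@cvg_cst C (ev e1 z) R _ _) (IH2 d2).
  apply: (@cvg_eqnear _ _ _ _ (cvgD (c1 (dnbhs_filter _)) (c2 (dnbhs_filter _) (dnbhs_filter _)))).
  near=> h; rewrite /GRing.scale /= ?fctE /=; ring.
- move=> e IH [d nz].
  have gp := @ev_path e z v d.
  have c1 := cvgM (@cvg_cst C (-1) R (0:R)^' _) (IH d).
  have c2 := cvgM (cvgV nz gp) (@cvg_cst C (ev e z)^-1 R (0:R)^' _).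
  have D := dnbhs_filter (0:R).
  apply: (@cvg_eqnear _ _ _ _ (cvgM (c1 D D) (c2 D D D))).
  have /cvgrPdist_lt H1 := gp.
  have np : 0 < `|ev e z| by rewrite normr_gt0.
  have H2 := H1 _ np. have H3 := iC_neq0.
  near=> h.
  have Hy : `|ev e z - ev e (z + h%:C *: v)| < `|ev e z| by near: h.
  have n1 : ev e (z + h%:C *: v) != 0.
    apply/eqP => ey; move: Hy; rewrite ey subr0 ltxx //.
  rewrite /GRing.scale /=; field.
  rewrite nz n1 /=; by near: h.
Unshelve. all: by end_near. Qed.

Section Sum.
Variables (W : normedModType R[i]) (I : finType) (w : I -> W).

Definition SE (E : I -> ex) (z : V) : W := \sum_(i : I) (ev (E i) z : R[i]) *: w i.

Lemma SE_cont E z : (forall i, dfd (E i) z) -> SE E @ z --> SE E z.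
Proof.
move=> d; apply: cvg_bigsum => i.
exact: (cvgZ (@ev_cont (E i) z (d i)) (cvg_cst (w i))).
Qed.

Lemma SE_deriv E z v : (forall i, dfd (E i) z) ->
  rdquot (SE E) z v @ (0:R)^' --> SE (fun i => Dx v (E i)) z.
Proof.
move=> d.
have -> : rdquot (SE E) z v = fun h => \sum_(i : I)
   (rdquot (ev (E i)) z v h : R[i]) *: w i.
  apply: funext => h; rewrite /rdquot /SE -sumrB scaler_sumr; apply: eq_bigr => i _.
  by rewrite -scalerBl scalerA.
apply: cvg_bigsum => i.
exact: (cvgZ (@ev_deriv (E i) z v (d i)) (cvg_cst (w i))).
Qed.
End Sum.
Arguments SE {W I} w E z.
Arguments SE_cont {W I} w E z.
Arguments SE_deriv {W I} w E z v.

Lemma cvg_neartr {T} {U : topologicalType} (F : set_system T) (FF : Filter F)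
  (f g : T -> U) (l : U) :
  (\forall x \near F, f x = g x) -> g @ F --> l -> f @ F --> l.
Proof.
move=> fg gl; apply: cvg_trans gl; apply: near_eq_cvg.
by apply: filterS fg => h ->.
Qed.

Lemma local_rdquot (W : normedModType R[i]) (U : set V) (F G : V -> W) z v :
  open U -> U z -> (forall y, U y -> F y = G y) ->
  \forall h \near (0:R)^', rdquot F z v h = rdquot G z v h.
Proof.
move=> oU Uz FG.
have nU : nbhs z U by apply: open_nbhs_nbhs; split.
have := @path_cvg z v U nU.
move=> H; apply: (@filterS R _ (dnbhs_filter (0:R)) _ _ _ H) => h /= Uh; rewrite /rdquot FG // FG //.
Qed.

Fixpoint Dl (vs : seq V) (e : ex) : ex :=
  match vs with [::] => e | v :: vs' => Dx v (Dl vs' e) end.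

Lemma dfd_Dl vs e z : dfd e z -> dfd (Dl vs e) z.
Proof. by elim: vs => //= v vs IH d; apply: dfd_D; apply: IH. Qed.

Lemma smooth_SE (W : normedModType R[i]) (I : finType) (w : I -> W)
   (E : I -> ex) (F : V -> W) :
  (forall z, (forall i, dfd (E i) z) -> F z = SE w E z) ->
  open [set z | forall i, dfd (E i) z] /\ smooth_on [set z | forall i, dfd (E i) z] F.
Proof.
set U := [set z | forall i, dfd (E i) z] => FS.
have oU : open U.
  rewrite openE => z Uz; rewrite /interior /=.
  exact: (@filter_forall _ I _ (nbhs z) (@filter_filter _ _ (nbhs_pfilter z)) (fun i => @dfd_near (E i) z (Uz i))).
have key : forall vs z, U z ->
   riter_derive vs F z = SE w (fun i => Dl vs (E i)) z.
  elim => [|v vs IH] z Uz /=; first exact: FS.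
  have c : rdquot (riter_derive vs F) z v @ (0:R)^' -->
           SE w (fun i => Dx v (Dl vs (E i))) z.
    have L := @local_rdquot _ _ _ _ z v oU Uz IH. refine (@cvg_neartr _ _ _ _ _ _ _ L _).
    apply: SE_deriv => i; apply: dfd_Dl; exact: Uz.
  exact: (cvg_lim (@norm_hausdorff _ W) c).
split => //.
move=> vs; split.
- move=> z Uz v; apply/cvg_ex; exists (SE w (fun i => Dx v (Dl vs (E i))) z).
  have L := @local_rdquot _ _ _ _ z v oU Uz (key vs). refine (@cvg_neartr _ _ _ _ _ _ _ L _).
  apply: SE_deriv => i; apply: dfd_Dl; exact: Uz.
- move=> z Uz.
  have nU : nbhs z U by apply: open_nbhs_nbhs; split.
  have nE : \forall y \near z, riter_derive vs F y = SE w (fun i => Dl vs (E i)) y.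
    by apply: (@filterS _ _ (@filter_filter _ _ (nbhs_pfilter z)) _ _ _ nU) => y Uy; rewrite key.
  refine (@cvg_neartr _ _ _ _ _ _ _ nE _).
  rewrite (key vs z Uz).
  apply: SE_cont => i; apply: dfd_Dl; exact: Uz.
Qed.
End Expr.
End Aux.

Arguments EC {R m1 m2}. Arguments EX1 {R m1 m2}. Arguments EX2 {R m1 m2}.
Arguments EA {R m1 m2}. Arguments EMu {R m1 m2}. Arguments EI {R m1 m2}.
Arguments ev {R m1 m2}. Arguments dfd {R m1 m2}.
Arguments SE {R m1 m2 W I}.
Arguments smooth_SE {R m1 m2 W I}.

Set Implicit Arguments. Unset Strict Implicit.

Section Concrete.
Variables (R : realType) (m1 m2 : nat).

Definition sumE (N : nat) (f : 'I_N -> ex R m1 m2) : ex R m1 m2 :=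
  \big[EA/EC 0]_(l < N) f l.

Lemma ev_sumE N f z : ev (@sumE N f) z = \sum_(l < N) ev (f l) z.
Proof.
rewrite /sumE; apply: (big_morph (fun e => ev e z)) => //.
Qed.

Lemma dfd_sumE N f z : (forall l, dfd (f l) z) -> dfd (@sumE N f) z.
Proof.
move=> H; rewrite /sumE; apply: (big_ind (fun e => dfd e z)) => //.
Qed.
End Concrete.

Lemma pair_sum (T1 T2 : zmodType) (I : finType) (s : I -> T1 * T2) :
  \sum_(i : I) s i = (\sum_(i : I) (s i).1, \sum_(i : I) (s i).2).
Proof.
elim/big_rec3: _ => //= i x1 x2 x3 _ ->. by [].
Qed.

Section PsiPart.
Variables (R : realType) (n k : nat) (b : 'M[R[i]]_(k, n)) (a : 'rV[R[i]]_n).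

Definition fE (j : 'I_n) : ex R n k :=
  EA (sumE (fun l : 'I_k => EMu (EX2 l) (EC (b l j)))) (EX1 j).

Lemma ev_fE j z : ev (fE j) z = fA b j z.
Proof.
rewrite /fE /= ev_sumE /fA !mxE; congr (_ + _).
Qed.

Lemma dfd_fE j z : dfd (fE j) z.
Proof. by split => //; apply: dfd_sumE. Qed.

Definition E1 (i : ('I_n + 'I_n)%type) : ex R n k :=
  match i with inl j => EX1 j | inr j => EMu (EC (a 0 j)) (EI (fE j)) end.

Definition w1 (i : ('I_n + 'I_n)%type) : VV R n n :=
  match i with inl j => (delta_mx 0 j, 0) | inr j => (0, delta_mx 0 j) end.

Lemma PsiA_SE z : PsiA b a z = SE w1 E1 z.
Proof.
rewrite /SE big_sumType /= /PsiA.
rewrite !pair_sum /=.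
have Z : forall (c : 'I_n -> R[i]), \sum_(i < n) c i *: (0 : 'rV[R[i]]_n) = 0.
  by move=> c; apply: big1 => i _; exact: scaler0.
rewrite !Z.
rewrite -[\sum_(i < n) z.1 0 i *: _]row_sum_delta.
rewrite -[RHS]/(z.1 + 0, 0 + _) addr0 add0r; congr pair.
rewrite {1}(row_sum_delta (\row_j (a 0 j / fA b j z))); apply: eq_bigr => j _.
by rewrite mxE -(ev_fE j z).
Qed.


Lemma Psi_smooth : smooth_subset (critA b a) (PsiA b a).
Proof.
move=> z [Uz _].
have [oU sm] := smooth_SE w1 E1 (PsiA b a) (fun z _ => PsiA_SE z).
exists [set z | forall i, dfd (E1 i) z], (PsiA b a); split => //.
case => [j|j] //=; split => //; split; first exact: dfd_fE.
by move: (ev_fE j z) => /= ->; exact: Uz.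
Qed.
End PsiPart.

Section GPart.
Variables (R : realType) (n k : nat) (b : 'M[R[i]]_(k, n)) (a : 'rV[R[i]]_n).

Definition Ginv (y : 'rV[R[i]]_n * 'rV[R[i]]_n) : 'rV[R[i]]_n * 'rV[R[i]]_k :=
  (y.1, (\row_j (a 0 j / y.2 0 j - y.1 0 j)) *m pinvmx b).

Definition E2 (i : ('I_n + 'I_k)%type) : ex R n n :=
  match i with inl j => EX1 j
  | inr l => sumE (fun j : 'I_n => EMu (EA (EMu (EC (a 0 j)) (EI (EX2 j)))
                                          (EMu (EC (-1)) (EX1 j)))
                                      (EC (pinvmx b j l))) end.

Definition w2 (i : ('I_n + 'I_k)%type) : VV R n k :=
  match i with inl j => (delta_mx 0 j, 0) | inr j => (0, delta_mx 0 j) end.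

Lemma Ginv_SE y : Ginv y = SE w2 E2 y.
Proof.
rewrite /SE big_sumType /= /Ginv.
rewrite !pair_sum /=.
have Z1 : forall (c : 'I_n -> R[i]), \sum_(i < n) c i *: (0 : 'rV[R[i]]_k) = 0.
  by move=> c; apply: big1 => i _; exact: scaler0.
have Z2 : forall (c : 'I_k -> R[i]), \sum_(i < k) c i *: (0 : 'rV[R[i]]_n) = 0.
  by move=> c; apply: big1 => i _; exact: scaler0.
rewrite Z1 Z2.
rewrite -[\sum_(i < n) y.1 0 i *: _]row_sum_delta.
rewrite -[RHS]/(y.1 + 0, 0 + _) addr0 add0r; congr pair.
rewrite {1}(row_sum_delta (_ *m _)); apply: eq_bigr => l _.
rewrite ev_sumE !mxE; congr (_ *: _); apply: eq_bigr => j _.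
by rewrite /= !mxE; ring.
Qed.

Lemma G_smooth : smooth_subset (L_Ya b a) Ginv.
Proof.
move=> y [q [p [_ _ pn ->]]].
have [oU sm] := smooth_SE w2 E2 Ginv (fun z _ => Ginv_SE z).
exists [set z | forall i, dfd (E2 i) z], Ginv; split => //.
case => [j|l] //=; apply: dfd_sumE => j /=.
by split => //; split => //; split => //; split => //.
Qed.
End GPart.

Section Alg.
Variables (R : realType) (n k : nat) (b : 'M[R[i]]_(k, n)) (a : 'rV[R[i]]_n).
Hypothesis an : forall j : 'I_n, a 0 j != 0.

Lemma Ginv_r (q p : 'rV[R[i]]_n) : (forall j, p 0 j != 0) ->
  Ginv b a (r_a a (q, p)) = (\row_j (q 0 j + a 0 j / p 0 j), (- q) *m pinvmx b).
Proof.
move=> pn; rewrite /Ginv /r_a /=; congr (_, _ *m _).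
by apply/rowP => j; rewrite !mxE; ring.
Qed.

Lemma fA_G (q p : 'rV[R[i]]_n) j : inY b q -> (forall j, p 0 j != 0) ->
  fA b j (Ginv b a (r_a a (q, p))) = a 0 j / p 0 j.
Proof.
move=> qY pn; rewrite Ginv_r // /fA /= !mulNmx mulmxKpV // !mxE; ring.
Qed.

Lemma crit_to_L z : critA b a z -> L_Ya b a (PsiA b a z).
Proof.
case: z => x u [Uz dz].
exists (- (u *m b)), (\row_j (a 0 j / fA b j (x, u))); split.
- by rewrite /inY -mulNmx submxMl.
- apply/matrixP => i j0; rewrite ord1 !mxE -[RHS](dz i) /dPhi_dt.
  by apply: eq_bigr => j _; rewrite !mxE mulrA.
- by move=> j; rewrite mxE mulf_neq0 // invr_neq0 // Uz.
- rewrite /PsiA /r_a /=; congr pair; apply/rowP => j.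
  rewrite !mxE /fA /= !mxE.
  have fz := Uz j; move: fz; rewrite /fA /= !mxE => fz.
  field; by rewrite fz an.
Qed.

Lemma L_to_crit y : L_Ya b a y -> critA b a (Ginv b a y).
Proof.
case=> q [p [qY pY pn ->]]; split.
- by move=> j; rewrite fA_G // mulf_neq0 // invr_neq0.
- move=> i; rewrite /dPhi_dt.
  have := congr1 (fun M : 'M[R[i]]_(k, 1) => M i 0) (pY : b *m p^T = 0); rewrite !mxE => H; rewrite -[RHS]H.
  apply: eq_bigr => j _; rewrite fA_G // !mxE.
  field; by rewrite an pn.
Qed.

Lemma GF z : critA b a z -> row_free b -> Ginv b a (PsiA b a z) = z.
Proof.
case: z => x u [Uz _] rf; rewrite /Ginv /PsiA /=; congr pair.
rewrite -[RHS](mulmxKp rf u); congr (_ *m _); apply/rowP => j.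
have fz := Uz j; move: fz; rewrite /fA /= !mxE => fz.
field; by rewrite fz an.
Qed.

Lemma FG y : L_Ya b a y -> PsiA b a (Ginv b a y) = y.
Proof.
case=> q [p [qY pY pn ->]].
rewrite /PsiA [RHS]/r_a; congr pair.
apply/rowP => j; rewrite mxE fA_G //.
field; by rewrite an pn.
Qed.
End Alg.

Local Close Scope complex_scope.

Theorem theorem4p5 (R : realType) (n k : nat) (b : 'M[R[i]]_(k, n))
    (a : 'rV[R[i]]_n) :
  (0 < k)%N -> (k < n)%N ->
  (forall j : 'I_n, col j b != 0) ->
  \rank b = k ->
  (forall j : 'I_n, a 0 j != 0) ->
  (forall j : 'I_n, exists p : 'rV[R[i]]_n, inYperp b p /\ p 0 j != 0) ->
  (exists z, critA b a z) ->
  diffeo_onto (critA b a) (L_Ya b a) (PsiA b a).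
Proof.
move=> _ _ _ rk an _ _.
have rf : row_free b by rewrite /row_free rk.
exists (Ginv b a); split.
- exact: crit_to_L.
- exact: L_to_crit.
- by move=> z cz; exact: GF.
- exact: FG.
- split; [exact: Psi_smooth | exact: G_smooth].
Qed.
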